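(* Fix $\mu>-3/2$, $z>0$, and let $u_y$ and $M_y$ be as in the context. Then as $y\downarrow0$, $$u_y=\frac{\log(y)^2}{4y^2}\left[1-\frac{2\log\log(1/y)}{\log(y)}+\frac{\log(z^2)}{\log(y)}+o\!\left(\frac{1}{\log(y)}\right)\right],$$ and $$M_y=\frac{y^3}{\log(y)^2}\left[1+\mathcal{O}\!\left(\frac{\log|\log(y)|}{\log(y)}\right)\right].$$
   Context: For $y>0$, $u_y$ denotes the largest positive solution $u$ of $2\mu-1+4uy+2\log(z/2)\sqrt{u}-\sqrt{u}\log(u)=0$; $\alpha:=1+\log(z)-\log(2)$; and $M_y:=\frac{\log(u_y)}{16u_y^{3/2}}-\frac{\alpha}{8u_y^{3/2}}+\frac{1-2\mu}{8u_y^2}$. *)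

(* Defs.v *)
From Stdlib Require Import Reals.
Open Scope R_scope.

Definition Fu (mu z y u : R) : R :=
  2 * mu - 1 + 4 * u * y + 2 * ln (z / 2) * sqrt u - sqrt u * ln u.

Definition is_largest_pos_root (mu z y u : R) : Prop :=
  0 < u /\ Fu mu z y u = 0 /\
  (forall v : R, 0 < v -> Fu mu z y v = 0 -> v <= u).

Definition alpha (z : R) : R := 1 + ln z - ln 2.

(* M_y as a function of u = u_y *)
Definition M_of (mu z u : R) : R :=
  ln u / (16 * Rpower u (3/2)) - alpha z / (8 * Rpower u (3/2))
  + (1 - 2 * mu) / (8 * u ^ 2).

(* Main.v *)
Require Import Defs.
From Stdlib Require Import Reals Lra Ranalysis5.
Open Scope R_scope.

Lemma ln_le_sub1 x : 0 < x -> ln x <= x - 1.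
Proof. intro h. pose proof (exp_ineq1_le (ln x)). rewrite exp_ln in H; lra. Qed.

Lemma Fu_t mu z y s : 0 < z -> 0 < y -> 0 < s ->
  Fu mu z y (s^2) = 2 * s * ((2*mu-1) * y / (2*y*s) + 2*y*s + ln z - ln (2*y*s) + ln y).
Proof.
  intros hz hy hs. unfold Fu.
  rewrite sqrt_pow2 by lra.
  rewrite ln_pow by lra.
  unfold Rdiv. rewrite ln_mult by lra. rewrite ln_Rinv by lra.
  rewrite !ln_mult by lra. simpl INR. field. lra.
Qed.

Lemma cont_f (a b c0 : R) t : 0 < t ->
  continuity_pt (fun t => t - a - ln t + b + c0 / t) t.
Proof.
  intro ht.
  apply derivable_continuous_pt.
  apply derivable_pt_plus. apply derivable_pt_plus. apply derivable_pt_minus.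
  apply derivable_pt_minus. apply derivable_pt_id. apply derivable_pt_const.
  exists (/t). apply derivable_pt_lim_ln; auto.
  apply derivable_pt_const.
  apply derivable_pt_div. apply derivable_pt_const. apply derivable_pt_id. lra.
Qed.

Lemma ln_ge_of x k : exp k <= x -> k <= ln x.
Proof.
  intro h. pose proof (exp_pos k).
  destruct (Req_dec x (exp k)) as [e|n].
  - subst. rewrite ln_exp. lra.
  - rewrite <- (ln_exp k) at 1. left. apply ln_increasing; lra.
Qed.

Lemma yL_le y : 0 < y -> y * (1 + - ln y) <= 1.
Proof.
  intro hy. pose proof (exp_ineq1_le (- ln y)).
  rewrite exp_Ropp, exp_ln in H by lra.
  apply Rmult_le_compat_l with (r := y) in H; [|lra].
  rewrite Rinv_r in H; lra.
Qed.

Lemma lnL_bound L : 1 <= L -> ln L <= 4 * sqrt (sqrt L) - 4 /\ sqrt (sqrt L) ^ 4 = L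
   /\ 1 <= sqrt (sqrt L).
Proof.
  intro h.
  assert (h1 : sqrt (sqrt L) ^ 4 = L).
  { replace (sqrt (sqrt L) ^ 4) with ((sqrt (sqrt L) * sqrt (sqrt L)) * (sqrt (sqrt L) * sqrt (sqrt L))) by ring.
    rewrite !sqrt_sqrt; try lra. apply sqrt_pos. }
  assert (h2 : 1 <= sqrt (sqrt L)).
  { rewrite <- sqrt_1. apply sqrt_le_1_alt. rewrite <- sqrt_1. apply sqrt_le_1_alt. lra. }
  split; [|split]; auto.
  rewrite <- h1 at 1. rewrite ln_pow by lra. pose proof (ln_le_sub1 (sqrt (sqrt L))).
  simpl INR. lra.
Qed.

Lemma cbound c y x : 0 < x -> 0 <= y -> y <= x -> - Rabs c <= c * y / x <= Rabs c.
Proof.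
  intros hx hy hyx.
  assert (0 <= y / x <= 1).
  { split. unfold Rdiv; apply Rmult_le_pos; [lra | left; apply Rinv_0_lt_compat; lra].
    apply Rmult_le_reg_r with x. lra. unfold Rdiv. rewrite Rmult_assoc, Rinv_l by lra. lra. }
  replace (c*y/x) with (c * (y/x)) by (unfold Rdiv; ring).
  unfold Rabs; destruct (Rcase_abs c); split; nra.
Qed.

Lemma core mu z y u : 0 < z -> 0 < y -> y < 1 -> is_largest_pos_root mu z y u ->
  exp (1 + Rabs (ln z) + Rabs (2*mu-1)) <= - ln y ->
  2 + (1 + Rabs (ln z) + Rabs (2*mu-1)) <= sqrt (sqrt (- ln y)) ->
  - ln y <= 2 * y * sqrt u <= 2 * (- ln y) /\
  (2*mu-1) * y / (2 * y * sqrt u) + 2 * y * sqrt u + ln z - ln (2 * y * sqrt u) - (- ln y) = 0.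
Proof.
  intros hz hy hy1 [hu [hF hmax]] hL hr.
  set (L := - ln y) in *.
  set (c := 2*mu-1) in *.
  set (K1 := 1 + Rabs (ln z) + Rabs c) in *.
  set (s := sqrt u).
  assert (hs : 0 < s) by (apply sqrt_lt_R0; lra).
  assert (hus : u = s^2) by (unfold s; rewrite pow2_sqrt; lra).
  pose proof (exp_ineq1_le K1) as hK.
  assert (hK1 : 1 <= K1) by (unfold K1; pose proof (Rabs_pos (ln z)); pose proof (Rabs_pos c); lra).
  assert (hL1 : 1 <= L) by lra.
  destruct (lnL_bound L hL1) as [hlnL [hr4 hr1]].
  set (r := sqrt (sqrt L)) in *.
  assert (hln2 : ln 2 <= 1) by (pose proof (ln_le_sub1 2); lra).
  assert (hln2L : ln (2*L) = ln 2 + ln L) by (apply ln_mult; lra).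
  assert (hbig : ln (2*L) + Rabs (ln z) + Rabs c < L).
  { assert (r3 : 3 <= r) by lra.
    assert (r*r >= 9) by nra.
    assert (r^4 >= 27 * r) by (replace (r^4) with ((r*r)*(r*r)) by ring; nra).
    unfold K1 in hr. lra. }
  assert (hyL := yL_le y hy). fold L in hyL.
  pose proof (Rle_abs (ln z)) as hlz1. pose proof (Rle_abs (- ln z)) as hlz2. rewrite Rabs_Ropp in hlz2.
  assert (hroot : c * y / (2*y*s) + 2*y*s + ln z - ln (2*y*s) - L = 0).
  { rewrite hus in hF. rewrite Fu_t in hF by lra. fold c in hF. unfold L.
    apply Rmult_integral in hF. destruct hF as [h|h]; lra. }
  split; [|exact hroot].
  set (t := 2*y*s) in *.
  assert (ht : 0 < t) by (unfold t; nra).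
  split.
  -
    set (f := fun t => t - L - ln t + ln z + c * y / t).
    assert (fL : f L < 0).
    { unfold f. assert (K1 <= ln L) by (apply ln_ge_of; lra).
      pose proof (cbound c y L ltac:(lra) ltac:(lra) ltac:(lra)). unfold K1 in *. lra. }
    assert (f2L : 0 < f (2*L)).
    { unfold f.
      pose proof (cbound c y (2*L) ltac:(lra) ltac:(lra) ltac:(lra)). lra. }
    destruct (IVT_interv f L (2*L)) as [t0 [[ht0a ht0b] ft0]].
    { intros a ha. apply cont_f. lra. }
    lra. exact fL. exact f2L.
    set (s0 := t0 / (2*y)).
    assert (hs0 : 0 < s0) by (unfold s0; apply Rdiv_lt_0_compat; lra).
    assert (F0 : Fu mu z y (s0^2) = 0).
    { rewrite Fu_t by lra. replace (2*y*s0) with t0 by (unfold s0; field; lra).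
      unfold f in ft0. fold c. replace (ln y) with (-L) by (unfold L; ring). nra. }
    assert (hle := hmax _ (pow_lt _ 2 hs0) F0).
    assert (s0 <= s).
    { unfold s. rewrite <- (sqrt_pow2 s0) by lra. apply sqrt_le_1_alt. exact hle. }
    unfold t. replace t0 with (2*y*s0) in ht0a by (unfold s0; field; lra). nra.
  -
    destruct (Rle_or_lt t (2*L)) as [h|h]; [exact h|exfalso].
    assert (ln t - ln (2*L) <= t - 2*L).
    { assert (ln t = ln (2*L) + ln (t / (2*L))).
      { rewrite <- ln_mult by (try apply Rdiv_lt_0_compat; lra). f_equal. field. lra. }
      pose proof (ln_le_sub1 (t/(2*L))).
      assert (t/(2*L) - 1 <= t - 2*L).
      { apply Rmult_le_reg_r with (2*L). lra.
        replace ((t/(2*L) - 1) * (2*L)) with (t - 2*L) by (field; lra). nra. }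
      apply Rdiv_lt_0_compat with (a:=t) (b := 2*L) in ht; lra. }
    pose proof (cbound c y t ltac:(lra) ltac:(lra) ltac:(lra)). lra.
Qed.

Lemma Rpower32 s : 0 < s -> Rpower (s^2) (3/2) = s^3.
Proof.
  intro hs. unfold Rpower. rewrite ln_pow by lra.
  replace (3/2 * (INR 2 * ln s)) with (INR 3 * ln s) by (simpl; field).
  rewrite <- ln_pow by lra. apply exp_ln. apply pow_lt; lra.
Qed.

Lemma setup mu z (d0 : R) (u : R -> R) R0 y :
  0 < z ->
  (forall y : R, 0 < y < d0 -> is_largest_pos_root mu z y (u y)) ->
  2 + (1 + Rabs (ln z) + Rabs (2*mu-1)) <= R0 ->
  0 < y < Rmin d0 (exp (-(R0^4 + exp (1 + Rabs (ln z) + Rabs (2*mu-1))))) ->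
  let L := - ln y in let t := 2 * y * sqrt (u y) in
  0 < u y /\ y < 1 /\ 1 <= L /\ R0 <= sqrt (sqrt L) /\
  exp (1 + Rabs (ln z) + Rabs (2*mu-1)) <= L /\ y * (1 + L) <= 1 /\
  L <= t <= 2 * L /\
  (2*mu-1) * y / t + t + ln z - ln t - L = 0.
Proof.
  intros hz hu hR0 [hy hyd] L t.
  set (K1 := 1 + Rabs (ln z) + Rabs (2*mu-1)) in *.
  assert (hyd0 : y < d0) by (eapply Rlt_le_trans; [exact hyd| apply Rmin_l]).
  assert (hye : y < exp (-(R0^4 + exp K1))) by (eapply Rlt_le_trans; [exact hyd| apply Rmin_r]).
  assert (hK1 : 1 <= K1) by (unfold K1; pose proof (Rabs_pos (ln z)); pose proof (Rabs_pos (2*mu-1)); lra).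
  assert (hR01 : 1 <= R0) by lra.
  assert (hLbig : R0^4 + exp K1 < L).
  { unfold L. apply ln_increasing in hye; [|lra]. rewrite ln_exp in hye. lra. }
  assert (hR4 : 0 <= R0^4) by (apply pow_le; lra).
  pose proof (exp_pos K1).
  assert (hL1 : 1 <= L) by (pose proof (exp_ineq1_le K1); lra).
  destruct (lnL_bound L hL1) as [_ [hr4 hr1]].
  assert (hr : R0 <= sqrt (sqrt L)).
  { destruct (Rle_or_lt R0 (sqrt (sqrt L))) as [h|h]; [exact h|exfalso].
    set (r := sqrt (sqrt L)) in *.
    assert (r^4 <= R0^4).
    { assert (r*r <= R0*R0) by nra.
      replace (r^4) with ((r*r)*(r*r)) by ring. replace (R0^4) with ((R0*R0)*(R0*R0)) by ring. nra. }
    lra. }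
  assert (hy1 : y < 1).
  { eapply Rlt_le_trans; [exact hye|]. rewrite <- exp_0. destruct (Req_dec (-(R0^4 + exp K1)) 0) as [e|n].
    rewrite e; lra. left. apply exp_increasing. lra. }
  pose proof (hu y (conj hy hyd0)) as hroot.
  destruct (core mu z y (u y) hz hy hy1 hroot ltac:(fold K1 L; lra) ltac:(fold K1 L; lra)) as [h1 h2].
  destruct hroot as [hu0 _].
  pose proof (yL_le y hy) as hyL. fold L in hyL.
  repeat split; try lra; fold L t in h1, h2 |- *.
  all: try lra.
Qed.

Lemma claim1_pure L t y c r eps A K1 :
  1 <= L -> r^4 = L -> 1 <= r -> A / eps + 1 <= r -> 0 < eps -> 0 < y ->
  L <= t <= 2 * L -> y * (1 + L) <= 1 ->
  ln L <= 4 * r - 4 -> ln 2 <= 1 ->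
  ln (2*L) = ln 2 + ln L ->
  0 <= t - L <= ln t + Rabs (Rabs c) + K1 - 1 - Rabs c ->
  1 <= K1 -> Rabs c <= K1 ->
  A = (4+K1)^2 + 2*(4+K1) + 2*K1 ->
  Rabs ((t-L)^2/L + 2*(ln t - ln L) - 2*(c*y/t)) <= eps.
Proof.
  intros hL hr4 hr1 hrA he hy ht hyL hlnL hln2 hln2L hw hK1 hcK hA.
  set (w := t - L) in *.
  assert (hlt : ln t <= ln (2*L)).
  { destruct (Req_dec t (2*L)) as [e|n]. rewrite e; lra. left; apply ln_increasing; lra. }
  assert (hw2 : w <= 4*r + K1) by (rewrite Rabs_Rabsolu in hw; lra).
  assert (hlog : 0 <= ln t - ln L <= w / L).
  { assert (ln t = ln L + ln (t/L)).
    { rewrite <- ln_mult by (try (unfold Rdiv; apply Rmult_lt_0_compat; [|apply Rinv_0_lt_compat]); lra). f_equal. field. lra. }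
    pose proof (ln_le_sub1 (t/L)).
    assert (t/L - 1 = w/L) by (unfold w; field; lra).
    assert (0 <= ln (t/L)).
    { destruct (Req_dec t L) as [e|n]. rewrite e, Rdiv_diag by lra. rewrite ln_1; lra.
      left. rewrite <- ln_1. apply ln_increasing. lra.
      apply Rmult_lt_reg_r with L. lra. unfold Rdiv. rewrite Rmult_assoc, Rinv_l by lra. lra. }
    assert (0 < t / L) by (unfold Rdiv; apply Rmult_lt_0_compat; [|apply Rinv_0_lt_compat]; lra).
    lra. }
  assert (hcy : - (Rabs c / L) <= c * y / t <= Rabs c / L).
  { assert (0 <= y / t <= 1 / L).
    { split. unfold Rdiv; apply Rmult_le_pos; [lra|left; apply Rinv_0_lt_compat; lra].
      apply Rmult_le_reg_r with (t*L). nra.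
      replace (y / t * (t*L)) with (y*L) by (field; lra).
      replace (1/L*(t*L)) with t by (field; lra). nra. }
    replace (c*y/t) with (c*(y/t)) by (unfold Rdiv; ring).
    replace (Rabs c / L) with (Rabs c * (1/L)) by (unfold Rdiv; ring).
    unfold Rabs; destruct (Rcase_abs c); split; nra. }
  assert (hwL : w / L <= w) by (apply Rmult_le_reg_r with L; [lra|]; unfold Rdiv; rewrite Rmult_assoc, Rinv_l by lra; nra).
  assert (hbound : w^2/L + 2*(w/L) + 2*(Rabs c / L) <= eps).
  { assert (hAr : A <= eps * r^2).
    { assert (r <= r^2) by nra. assert (hAe : A/eps <= r^2) by lra.
      apply Rmult_le_compat_l with (r := eps) in hAe; [|lra].
      replace (eps * (A/eps)) with A in hAe by (field; lra). lra. }
    assert (hnum : w^2 + 2*w + 2*Rabs c <= A * r^2).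
    { rewrite hA. assert (0 <= w) by lra. assert (w <= (4+K1)*r) by nra.
      assert (w^2 <= ((4+K1)*r)^2) by (apply pow_incr; lra).
      assert (r <= r^2) by nra. assert (1 <= r^2) by nra.
      assert (2*w <= 2*(4+K1)*r^2) by nra.
      assert (2*Rabs c <= 2*K1*r^2) by nra.
      assert (((4+K1)*r)^2 = (4+K1)^2*r^2) by ring. lra. }
    replace (w^2/L + 2*(w/L) + 2*(Rabs c/L)) with ((w^2 + 2*w + 2*Rabs c)/L) by (field; lra).
    apply Rmult_le_reg_r with L. lra. unfold Rdiv. rewrite Rmult_assoc, Rinv_l by lra.
    rewrite <- hr4. replace (r^4) with (r^2*r^2) by ring. nra. }
  assert (0 <= w^2/L) by (unfold Rdiv; apply Rmult_le_pos; [apply pow2_ge_0| left; apply Rinv_0_lt_compat; lra]).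
  apply Rabs_le. split; nra.
Qed.

Lemma claim2_pure L t y c K1 :
  1 <= L -> L <= t <= 2*L -> 0 < y -> y < 1 -> 1 <= K1 -> K1 <= ln L -> Rabs c <= K1 ->
  t - L <= ln L + K1 ->
  Rabs (L^2/t^2 - L^2/t^3 - c*y*L^2/t^4 - 1) <= (3 + 3*K1) * (ln L / L).
Proof.
  intros hL ht hy hy1 hK hlnL hc hw.
  assert (ht0 : 0 < t) by lra.
  set (q := L / t).
  assert (hq : 0 < q <= 1).
  { unfold q. split. unfold Rdiv; apply Rmult_lt_0_compat; [|apply Rinv_0_lt_compat]; lra.
    apply Rmult_le_reg_r with t. lra. unfold Rdiv. rewrite Rmult_assoc, Rinv_l by lra. lra. }
  assert (e1 : L^2/t^2 = q^2) by (unfold q; field; lra).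
  assert (e2 : L^2/t^3 = q^2 * /t) by (unfold q; field; lra).
  assert (e3 : c*y*L^2/t^4 = c * (y * q^2 * /t^2)) by (unfold q; field; lra).
  rewrite e1, e2, e3.
  assert (hinvt : 0 < /t <= /L).
  { split. apply Rinv_0_lt_compat; lra. apply Rinv_le_contravar; lra. }
  assert (hinvt2 : 0 < /t^2 <= /L).
  { split. apply Rinv_0_lt_compat. apply pow_lt; lra. apply Rinv_le_contravar. lra. nra. }
  assert (h1 : 0 <= 1 - q^2 <= 2 * (t - L) * /L).
  { assert (1 - q = (t - L) * /t) by (unfold q; field; lra).
    assert ((t-L) * /t <= (t-L) * /L) by (apply Rmult_le_compat_l; lra).
    nra. }
  assert (h2 : 0 <= q^2 * /t <= /L) by (split; nra).
  assert (hq2 : 0 <= q^2 <= 1) by (split; nra).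
  assert (hyq : 0 <= y * q^2 <= 1) by (split; nra).
  assert (h3 : 0 <= y * q^2 * /t^2 <= /L).
  { split. apply Rmult_le_pos; lra.
    apply Rle_trans with (1 * /t^2). apply Rmult_le_compat_r; lra. lra. }
  assert (h4 : Rabs (c * (y * q^2 * /t^2)) <= K1 * /L).
  { rewrite Rabs_mult. rewrite (Rabs_right (y*q^2*/t^2)) by lra.
    pose proof (Rabs_pos c). apply Rmult_le_compat; lra. }
  assert (hl1 : 1 <= ln L) by lra.
  assert (hiL : 0 < /L) by (apply Rinv_0_lt_compat; lra).
  assert (hfin : 2*(t-L)*/L + /L + K1*/L <= (3+3*K1) * (ln L / L)).
  { unfold Rdiv. replace (2*(t-L)*/L + /L + K1*/L) with ((2*(t-L) + 1 + K1) * /L) by ring.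
    rewrite <- Rmult_assoc. apply Rmult_le_compat_r. lra.
    assert (K1 * ln L >= K1) by nra. lra. }
  pose proof (Rle_abs (c * (y * q ^ 2 * / t ^ 2))). pose proof (Rle_abs (-(c * (y * q ^ 2 * / t ^ 2)))). rewrite Rabs_Ropp in *. apply Rabs_le. split; lra.
Qed.

Theorem mainTheorem3 (mu z : R) (hmu : -3/2 < mu) (hz : 0 < z)
  (u : R -> R)
  (hu : exists d : R, 0 < d /\
        forall y : R, 0 < y < d -> is_largest_pos_root mu z y (u y)) :
  (* u_y = log(y)^2/(4y^2) [1 - 2 loglog(1/y)/log y + log(z^2)/log y + o(1/log y)] *)
  (forall eps : R, 0 < eps -> exists d : R, 0 < d /\
     forall y : R, 0 < y < d ->
       Rabs (u y * (4 * y ^ 2) / (ln y) ^ 2 - 1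
             + 2 * ln (ln (/ y)) / ln y - ln (z ^ 2) / ln y)
       <= eps * Rabs (/ ln y)) /\
  (* M_y = y^3/log(y)^2 [1 + O(log|log y| / log y)] *)
  (exists C d : R, 0 < d /\
     forall y : R, 0 < y < d ->
       Rabs (M_of mu z (u y) * (ln y) ^ 2 / y ^ 3 - 1)
       <= C * Rabs (ln (Rabs (ln y)) / ln y)).
Proof.
  destruct hu as [d0 [hd0 hu]].
  set (c := 2*mu-1).
  set (K1 := 1 + Rabs (ln z) + Rabs c).
  assert (hK1 : 1 <= K1) by (unfold K1; pose proof (Rabs_pos (ln z)); pose proof (Rabs_pos c); lra).
  assert (hcK : Rabs c <= K1) by (unfold K1; pose proof (Rabs_pos (ln z)); lra).
  assert (hln2 : ln 2 <= 1) by (pose proof (ln_le_sub1 2); lra).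
  split.
  - intros eps heps.
    set (A := (4+K1)^2 + 2*(4+K1) + 2*K1).
    assert (hA0 : 0 <= A) by (unfold A; nra).
    assert (hAe : 0 <= A / eps) by (unfold Rdiv; apply Rmult_le_pos; [lra|left; apply Rinv_0_lt_compat; lra]).
    set (R0 := 2 + K1 + A/eps + 1).
    exists (Rmin d0 (exp (-(R0^4 + exp K1)))). split. apply Rmin_pos; [lra|apply exp_pos].
    intros y hy.
    pose proof (setup mu z d0 u R0 y hz hu ltac:(fold c K1; unfold R0; lra) ltac:(fold c K1; exact hy)) as S.
    cbv zeta in S. fold c K1 in S.
    destruct S as [hu0 [hy1 [hL1 [hr [hLe [hyL [ht hroot]]]]]]].
    set (L := - ln y) in *. set (t := 2*y*sqrt (u y)) in *.
    destruct (lnL_bound L hL1) as [hlnL [hr4 hr1]].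
    set (r := sqrt (sqrt L)) in *.
    assert (hy0 : 0 < y) by lra.
    assert (hlny : ln y = - L) by (unfold L; ring).
    assert (hsq : sqrt (u y) = t / (2*y)) by (unfold t; field; lra).
    assert (hue : u y = (t/(2*y))^2) by (rewrite <- hsq; rewrite pow2_sqrt; lra).
    assert (hlz : ln z = ln t + L - t - c*y/t) by lra.
    rewrite ln_Rinv by lra. rewrite hlny. replace (- - L) with L by ring.
    rewrite ln_pow by lra. rewrite hlz, hue.
    replace ((t / (2 * y)) ^ 2 * (4 * y ^ 2) / (- L) ^ 2 - 1 + 2 * ln L / - L -
      INR 2 * (ln t + L - t - c * y / t) / - L)
      with (((t-L)^2/L + 2*(ln t - ln L) - 2*(c*y/t)) * /L) by (simpl; field; lra).
    rewrite Rabs_mult. rewrite !Rabs_inv. rewrite Rabs_Ropp.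
    rewrite (Rabs_right L) by lra.
    apply Rmult_le_compat_r. left; apply Rinv_0_lt_compat; lra.
    pose proof (cbound c y t ltac:(lra) ltac:(lra) ltac:(lra)) as hcb.
    unfold R0 in hr. apply (claim1_pure L t y c r eps A K1); try lra.
    + apply ln_mult; lra.
    + rewrite Rabs_Rabsolu. unfold K1 in *. pose proof (Rle_abs (ln z)). pose proof (Rle_abs (- ln z)). rewrite Rabs_Ropp in *. lra.
    + reflexivity.
  - exists (3 + 3*K1), (Rmin d0 (exp (-((2+K1)^4 + exp K1)))). split. apply Rmin_pos; [lra|apply exp_pos].
    intros y hy.
    pose proof (setup mu z d0 u (2+K1) y hz hu ltac:(fold c K1; lra) ltac:(fold c K1; exact hy)) as S.
    cbv zeta in S. fold c K1 in S.
    destruct S as [hu0 [hy1 [hL1 [hr [hLe [hyL [ht hroot]]]]]]].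
    set (L := - ln y) in *. set (t := 2*y*sqrt (u y)) in *.
    assert (hy0 : 0 < y) by lra.
    assert (hlny : ln y = - L) by (unfold L; ring).
    assert (hsq : sqrt (u y) = t / (2*y)) by (unfold t; field; lra).
    assert (hue : u y = (t/(2*y))^2) by (rewrite <- hsq; rewrite pow2_sqrt; lra).
    assert (hlz : ln z = ln t + L - t - c*y/t) by lra.
    assert (hlnL : K1 <= ln L) by (apply ln_ge_of; lra).
    assert (hts : 0 < t / (2*y)) by (unfold Rdiv; apply Rmult_lt_0_compat; [|apply Rinv_0_lt_compat]; lra).
    assert (hlns : ln (t/(2*y)) = ln t - ln 2 + L).
    { unfold Rdiv. rewrite ln_mult, ln_Rinv, ln_mult; try lra. apply Rinv_0_lt_compat; lra. }
    rewrite hlny. rewrite Rabs_Ropp, (Rabs_right L) by lra.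
    replace (ln L / - L) with (- (ln L / L)) by (field; lra). rewrite Rabs_Ropp.
    rewrite (Rabs_right (ln L / L)).
    2: { apply Rle_ge. unfold Rdiv; apply Rmult_le_pos; [lra|left; apply Rinv_0_lt_compat; lra]. }
    unfold M_of, alpha. rewrite hue, Rpower32 by lra. rewrite ln_pow by lra. rewrite hlns, hlz.
    replace ((INR 2 * (ln t - ln 2 + L) / (16 * (t / (2 * y)) ^ 3) -
      (1 + (ln t + L - t - c * y / t) - ln 2) / (8 * (t / (2 * y)) ^ 3) +
      (1 - 2 * mu) / (8 * ((t / (2 * y)) ^ 2) ^ 2)) * (- L) ^ 2 / y ^ 3 - 1)
      with (L^2/t^2 - L^2/t^3 - c*y*L^2/t^4 - 1) by (unfold c; simpl; field; lra).
    apply claim2_pure; try lra.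
    pose proof (cbound c y t ltac:(lra) ltac:(lra) ltac:(lra)).
    assert (ln t <= ln 2 + ln L).
    { rewrite <- ln_mult by lra. destruct (Req_dec t (2*L)) as [e|n]. rewrite e; lra. left; apply ln_increasing; lra. }
    unfold K1 in *. pose proof (Rle_abs (ln z)). pose proof (Rle_abs (- ln z)). rewrite Rabs_Ropp in *. lra.
Qed.
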